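(* Suppose $\sigma$ is an automorphism of $D$ and $a\in D$. Then $f(t)=t^4-a\in D[t;\sigma]$ is reducible if and only if there exist $c,d\in D$ with $$\sigma^2(c)\sigma(c)c+\sigma^2(d)c+\sigma^2(c)\sigma(d)=0\quad\text{and}\quad \sigma^2(d)d+\sigma^2(c)\sigma(c)d=a.$$
   Context: $D$ is an associative division ring, $\sigma$ a ring automorphism of $D$, and $D[t;\sigma]$ the skew polynomial ring with $ta=\sigma(a)t$. $f$ is reducible if it can be written $f=gh$ with $\deg g,\deg h<\deg f$. *)

(* Defs.v *)
From mathcomp Require Import all_boot all_order all_algebra.
Set Implicit Arguments. Unset Strict Implicit. Unset Printing Implicit Defensive.
Import GRing.Theory.
Local Open Scope ring_scope.

(* Skew polynomial ring D[t;s]: elements are represented by their coefficient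
   polynomials in {poly D} (only the additive structure and coefficients of
   {poly D} are used); multiplication is the skew product determined by
   t a = s(a) t, i.e. (a t^i)(b t^j) = a s^i(b) t^(i+j). *)
Definition skew_mul (D : nzRingType) (s : D -> D) (p q : {poly D}) : {poly D} :=
  \poly_(k < size p + size q) \sum_(i < k.+1) p`_i * iter i s q`_(k - i).

Definition skew_reducible (D : nzRingType) (s : D -> D) (f : {poly D}) : Prop :=
  exists g h : {poly D},
    f = skew_mul s g h /\ (size g < size f)%N /\ (size h < size f)%N.

(* Main.v *)
Require Import Defs.
From mathcomp Require Import all_boot all_order all_algebra zify.
Import GRing.Theory.
Local Open Scope ring_scope.

Lemma iter_rm0 (D : nzRingType) (s : {rmorphism D -> D}) i : iter i s 0 = 0.
Proof. by elim: i => //= i ->; rewrite rmorph0. Qed.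

Lemma skew_coef (D : nzRingType) (s : {rmorphism D -> D}) p q k :
 (skew_mul s p q)`_k = \sum_(i < k.+1) p`_i * iter i s q`_(k - i).
Proof.
rewrite /skew_mul coef_poly; case: ltnP => // hk.
rewrite big1 // => i _.
case: (ltnP i (size p)) => hi.
  rewrite (nth_default 0 (s := q)); last by move: hi hk; case: i => j /= _; lia.
  by rewrite iter_rm0 mulr0.
by rewrite nth_default // mul0r.
Qed.

Lemma size_f (D : nzRingType) (a : D) : size ('X^4 - a%:P) = 5%N.
Proof. by rewrite size_XnsubC. Qed.

Lemma c0 (D : nzRingType) (s : {rmorphism D -> D}) p q : (skew_mul s p q)`_0 =
  p`_0 * q`_0.
Proof. by rewrite skew_coef !big_ord_recl big_ord0 ?addrA addr0. Qed.

Lemma c1 (D : nzRingType) (s : {rmorphism D -> D}) p q : (skew_mul s p q)`_1 =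
  p`_0 * q`_1 + p`_1 * s q`_0.
Proof. by rewrite skew_coef !big_ord_recl big_ord0 ?addrA addr0. Qed.

Lemma c2 (D : nzRingType) (s : {rmorphism D -> D}) p q : (skew_mul s p q)`_2 =
  p`_0 * q`_2 + p`_1 * s q`_1 + p`_2 * s (s q`_0).
Proof. by rewrite skew_coef !big_ord_recl big_ord0 ?addrA addr0. Qed.

Lemma c3 (D : nzRingType) (s : {rmorphism D -> D}) p q : (skew_mul s p q)`_3 =
  p`_0 * q`_3 + p`_1 * s q`_2 + p`_2 * s (s q`_1) + p`_3 * s (s (s q`_0)).
Proof. by rewrite skew_coef !big_ord_recl big_ord0 ?addrA addr0. Qed.

Lemma c4 (D : nzRingType) (s : {rmorphism D -> D}) p q : (skew_mul s p q)`_4 =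
  p`_0 * q`_4 + p`_1 * s q`_3 + p`_2 * s (s q`_2) + p`_3 * s (s (s q`_1)) + p`_4 * s (s (s (s q`_0))).
Proof. by rewrite skew_coef !big_ord_recl big_ord0 ?addrA addr0. Qed.

Lemma c5 (D : nzRingType) (s : {rmorphism D -> D}) p q : (skew_mul s p q)`_5 =
  p`_0 * q`_5 + p`_1 * s q`_4 + p`_2 * s (s q`_3) + p`_3 * s (s (s q`_2)) + p`_4 * s (s (s (s q`_1))) + p`_5 * s (s (s (s (s q`_0)))).
Proof. by rewrite skew_coef !big_ord_recl big_ord0 ?addrA addr0. Qed.

Lemma c6 (D : nzRingType) (s : {rmorphism D -> D}) p q : (skew_mul s p q)`_6 =
  p`_0 * q`_6 + p`_1 * s q`_5 + p`_2 * s (s q`_4) + p`_3 * s (s (s q`_3)) + p`_4 * s (s (s (s q`_2))) + p`_5 * s (s (s (s (s q`_1)))) + p`_6 * s (s (s (s (s (s q`_0))))).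
Proof. by rewrite skew_coef !big_ord_recl big_ord0 ?addrA addr0. Qed.


Section Alg.
Variables (D : unitRingType) (hD : forall x : D, x != 0 -> x \is a GRing.unit)
  (s : {rmorphism D -> D}) (sinv : D -> D) (sK : cancel s sinv) (Ks : cancel sinv s).

Lemma s_inj : injective s. Proof. exact: can_inj sK. Qed.
Lemma s0 (x : D) : s x = 0 -> x = 0.
Proof. by move=> e; apply: s_inj; rewrite e rmorph0. Qed.
Lemma sn0 (x : D) : x != 0 -> s x != 0.
Proof. by move=> h; apply/eqP => /s0; apply/eqP. Qed.
Lemma mul0l (x y : D) : x * y = 0 -> y != 0 -> x = 0.
Proof. by move=> e /(hD _) u; rewrite -(mulrK u x) /= e mul0r. Qed.

Lemma caseA (a g0 g1 g2 g3 h0 h1 : D) :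
  g3 * s (s (s h1)) = 1 ->
  g2 * s (s h1) + g3 * s (s (s h0)) = 0 ->
  g1 * s h1 + g2 * s (s h0) = 0 ->
  g0 * h1 + g1 * s h0 = 0 ->
  g0 * h0 = - a ->
  exists c d : D,
    s (s c) * s c * c + s (s d) * c + s (s c) * s d = 0 /\
    s (s d) * d + s (s c) * s c * d = a.
Proof.
move=> E4 E3 E2 E1 E0.
have h1n : h1 != 0.
  by apply/eqP => h; move: E4; rewrite h !rmorph0 mulr0 => /eqP; rewrite eq_sym oner_eq0.
have u := hD _ h1n.
set b := - (h1^-1 * h0).
have eh0 : h0 = - (h1 * b) by rewrite /b mulrN mulVKr // opprK.
rewrite eh0 !rmorphN !rmorphM in E3 E2 E1 E0.
move: E3; rewrite mulrN => /subr0_eq; rewrite mulrA E4 mul1r => A3.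
move: E2; rewrite mulrN => /subr0_eq; rewrite mulrA A3 => A2.
move: E1; rewrite mulrN => /subr0_eq; rewrite mulrA A2 => A1.
move: E0; rewrite mulrN => /oppr_inj; rewrite mulrA A1 => A0.
exists 0, (s b * b); split; first by rewrite !rmorph0 !(mulr0, mul0r, addr0).
by rewrite !rmorph0 !mulr0 !mul0r addr0 !rmorphM !mulrA.
Qed.

Lemma caseC (a g0 g1 g2 h0 h1 h2 : D) :
  h2 != 0 ->
  g2 * s (s h2) = 1 ->
  g1 * s h2 + g2 * s (s h1) = 0 ->
  g0 * h2 + g1 * s h1 + g2 * s (s h0) = 0 ->
  g0 * h1 + g1 * s h0 = 0 ->
  g0 * h0 = - a ->
  exists c d : D,
    s (s c) * s c * c + s (s d) * c + s (s c) * s d = 0 /\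
    s (s d) * d + s (s c) * s c * d = a.
Proof.
move=> h2n E4 E3 E2 E1 E0.
have u := hD _ h2n.
set c := - (h2^-1 * h1); set d := - (h2^-1 * h0).
have eh1 : h1 = - (h2 * c) by rewrite /c mulrN mulVKr // opprK.
have eh0 : h0 = - (h2 * d) by rewrite /d mulrN mulVKr // opprK.
clearbody c d.
rewrite eh0 eh1 !rmorphN !rmorphM in E3 E2 E1 E0.
move: E3; rewrite mulrN => /subr0_eq; rewrite mulrA E4 mul1r => A3.
move: E2; rewrite !mulrN !mulrA A3 E4 mul1r => E2.
have B : g0 * h2 = s (s c) * s c + s (s d).
  apply/subr0_eq; rewrite opprD addrA; exact E2.
move: E1; rewrite !mulrN !mulrA A3 B -opprD => /eqP; rewrite oppr_eq0 => /eqP E1.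
move: E0; rewrite !mulrN !mulrA B => /oppr_inj E0.
exists c, d; split.
  by move: E1; rewrite mulrDl.
by move: E0; rewrite mulrDl addrC.
Qed.

Lemma caseB (a g0 g1 h0 h1 h2 h3 : D) :
  h3 != 0 ->
  g1 * s h3 = 1 ->
  g0 * h3 + g1 * s h2 = 0 ->
  g0 * h2 + g1 * s h1 = 0 ->
  g0 * h1 + g1 * s h0 = 0 ->
  g0 * h0 = - a ->
  exists c d : D,
    s (s c) * s c * c + s (s d) * c + s (s c) * s d = 0 /\
    s (s d) * d + s (s c) * s c * d = a.
Proof.
move=> h3n E4 E3 E2 E1 E0.
have v := hD _ h3n.
have u := hD _ (sn0 _ h3n).
have eg1 : g1 = (s h3)^-1 by rewrite -[g1](mulrK u) /= E4 mul1r.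
set gam := - (s h3 * g0).
have key x y : g0 * x + g1 * s y = 0 -> s y = gam * x.
  move=> e; have e' : g1 * s y = - (g0 * x).
    by apply/eqP; rewrite -addr_eq0 addrC e.
  by rewrite -(mulVKr u (s y)) -eg1 e' /gam mulNr mulrN mulrA.
have S2 := key _ _ E3; have S1 := key _ _ E2; have S0 := key _ _ E1.
set bet := (s h3)^-1 * gam * h3.
have kb w : bet * (h3^-1 * w) = (s h3)^-1 * gam * w.
  by rewrite /bet -mulrA mulVKr.
set x := h3^-1 * h2; set y := h3^-1 * h1; set z := h3^-1 * h0.
have sx : s x = bet by rewrite rmorphM rmorphV // S2 /bet mulrA.
have sy : s y = bet * x by rewrite kb rmorphM rmorphV // S1 mulrA.
have sz : s z = bet * y by rewrite kb rmorphM rmorphV // S0 mulrA.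
have az : a = bet * z.
  by rewrite kb /gam mulrN mulrA mulVr // mul1r mulNr E0 opprK.
have xy : x * sinv y = z by apply: s_inj; rewrite rmorphM Ks sx sz.
exists 0, (sinv y); split; first by rewrite !rmorph0 !(mulr0, mul0r, addr0).
by rewrite !rmorph0 !mulr0 !mul0r addr0 Ks sy -mulrA xy az.
Qed.
End Alg.

Theorem mainTheorem16 (D : unitRingType)
  (hD : forall x : D, x != 0 -> x \is a GRing.unit)
  (s : {rmorphism D -> D}) (hs : bijective s) (a : D) :
  skew_reducible s ('X^4 - a%:P) <->
  exists c d : D,
    s (s c) * s c * c + s (s d) * c + s (s c) * s d = 0 /\
    s (s d) * d + s (s c) * s c * d = a.
Proof.
case: (hs) => sinv sK Ks.
split; last first.
  move=> [c [d [e1 e2]]].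
  exists (Poly [:: s (s c) * s c + s (s d); s (s c); 1]), (Poly [:: -d; -c; 1]).
  split; last by rewrite size_f; split; apply: leq_ltn_trans (size_Poly _) _.
  apply/polyP => k; rewrite skew_coef coefB coefXn coefC.
  case: k => [|[|[|[|[|k]]]]]; last first.
    rewrite big1; first by rewrite /= subr0.
    move=> i _; rewrite !coef_Poly.
    case: (ltnP i 3) => hi.
      rewrite (nth_default 0 (s := [:: -d; -c; 1])); last by move: hi; case: i => j /= _; lia.
      by rewrite iter_rm0 mulr0.
    by rewrite nth_default // mul0r.
  all: rewrite ?big_ord_recl ?big_ord0 ?coef_Poly /=;
    rewrite ?(subr0, sub0r, mulr0, mul0r, mulr1, mul1r, addr0, add0r, rmorph0, rmorph1, rmorphN, mulrN).
  all: try first [ by rewrite mulrDl addrC e2 | by rewrite -opprD mulrDl e1 oppr0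
             | by rewrite -opprD subrr | by rewrite subrr | by [] ].
move=> [g [h [Hf [Hg Hh]]]]; rewrite size_f in Hg Hh.
have gz i : (4 <= i)%N -> g`_i = 0.
  by move=> hi; apply: nth_default; apply: leq_trans _ hi; rewrite -ltnS.
have hz i : (4 <= i)%N -> h`_i = 0.
  by move=> hi; apply: nth_default; apply: leq_trans _ hi; rewrite -ltnS.
have E k := congr1 (fun p : {poly D} => p`_k) Hf.
have E0 := E 0%N; have E1 := E 1%N; have E2 := E 2%N; have E3 := E 3%N.
have E4 := E 4%N; have E5 := E 5%N; have E6 := E 6%N.
rewrite /= ?c0 ?c1 ?c2 ?c3 ?c4 ?c5 ?c6 !coefB !coefXn !coefC /= in E0 E1 E2 E3 E4 E5 E6.
rewrite ?(gz 4%N) ?(gz 5%N) ?(gz 6%N) ?(hz 4%N) ?(hz 5%N) ?(hz 6%N) // in E0 E1 E2 E3 E4 E5 E6.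
rewrite ?(subr0, sub0r, mulr0, mul0r, addr0, add0r, rmorph0) in E0 E1 E2 E3 E4 E5 E6.
symmetry in E0, E1, E2, E3, E4, E5, E6.
move: (g`_0) (g`_1) (g`_2) (g`_3) (h`_0) (h`_1) (h`_2) (h`_3) E0 E1 E2 E3 E4 E5 E6.
move=> g0 g1 g2 g3 h0 h1 h2 h3 E0 E1 E2 E3 E4 E5 E6.
have sn3 x : x != 0 -> s (s (s x)) != 0 by move=> hx; do 3 apply: (sn0 _ s sinv sK).
have sn2 x : x != 0 -> s (s x) != 0 by move=> hx; do 2 apply: (sn0 _ s sinv sK).
case: (eqVneq h3 0) => eh3.
  rewrite eh3 ?rmorph0 ?mulr0 ?addr0 ?add0r in E3 E4 E5 E6.
  case: (eqVneq h2 0) => eh2.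
    rewrite eh2 ?rmorph0 ?mulr0 ?addr0 ?add0r in E2 E3 E4 E5.
    exact: (caseA _ hD s _ _ _ _ _ _ _ E4 E3 E2 E1 E0).
  have g3z : g3 = 0 by apply: (mul0l _ hD _ _ E5); apply: sn3.
  rewrite g3z ?mul0r ?addr0 in E3 E4.
  exact: (caseC _ hD s _ _ _ _ _ _ _ eh2 E4 E3 E2 E1 E0).
have g3z : g3 = 0 by apply: (mul0l _ hD _ _ E6); apply: sn3.
rewrite g3z ?mul0r ?addr0 in E3 E4 E5.
have g2z : g2 = 0 by apply: (mul0l _ hD _ _ E5); apply: sn2.
rewrite g2z ?mul0r ?addr0 in E2 E3 E4.
exact: (caseB _ hD s sinv sK Ks _ _ _ _ _ _ _ eh3 E4 E3 E2 E1 E0).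
Qed.
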